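(* Assume the setup in the context, with the fine-tuning regime, and let $0<\epsilon\le 1$ be such that $|\langle\tau_i,\tau_j\rangle|\le\epsilon\|\tau_i\|\|\tau_j\|$ for all $i\neq j$. Let $\mathbf{T}=[\tau_1,\dots,\tau_T]\in\mathbb{R}^{d\times T}$, $\mathbf{G}=\mathbf{T}^\top\mathbf{T}$ with eigenvalues $\lambda_1(\mathbf{G})\ge\dots\ge\lambda_T(\mathbf{G})$, and $1\le M<T$. Let $\mathbf{W}_e\in\mathbb{R}^{T\times M}$, $\mathbf{W}_d\in\mathbb{R}^{M\times T}$, $\hat{\mathbf{T}}=\mathbf{T}\mathbf{W}_e\mathbf{W}_d$ with $i$-th column $\hat\tau_i$, and suppose $\|\hat{\mathbf{T}}-\mathbf{T}\|_2^2=\lambda_{M+1}(\mathbf{G})$ (spectral norm). Fix $i\in[T]$ and $\alpha_i\in[0,1]$, let $\theta_{\mathrm{Neg},i}=\theta_0-\alpha_i\hat\tau_i$, and assume local smoothness holds with radius $r\ge 2\sqrt{C}+\sqrt{\lambda_{M+1}(\mathbf{G})}$. Then for every $j\neq i$, $$\mathcal{L}_j(\theta_{\mathrm{Neg},i})-\mathcal{L}_j(\theta_0)\le L_jC\Big(\frac{5}{2}+2\epsilon\Big)+L_j\lambda_{M+1}(\mathbf{G}).$$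
   Context: Setup: $\theta_0\in\mathbb{R}^d$ is a pretrained parameter vector; $\theta_1,\dots,\theta_T\in\mathbb{R}^d$ are fine-tuned parameters and $\tau_i:=\theta_i-\theta_0$ are task vectors. For each task $i$, $\mathcal{L}_i:\mathbb{R}^d\to\mathbb{R}$ is a differentiable loss (population risk). Norms are Euclidean. Fine-tuning regime: $\nabla\mathcal{L}_i(\theta_i)=0$ for all $i\in[T]$, and there is $C>0$ with $\|\tau_i\|^2\le C$ for all $i$. Local smoothness with radius $r>0$: for each $i$ there is $L_i\ge 0$ such that for all $\theta$ with $\|\theta-\theta_i\|\le r$, $\big|\mathcal{L}_i(\theta)-\mathcal{L}_i(\theta_i)-\langle\theta-\theta_i,\nabla\mathcal{L}_i(\theta_i)\rangle\big|\le\frac{L_i}{2}\|\theta-\theta_i\|^2$. The hypothesis $\|\hat{\mathbf{T}}-\mathbf{T}\|_2^2=\lambda_{M+1}(\mathbf{G})$ says the autoencoder reconstruction attains the optimal rank-$M$ spectral-norm error. *)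

(* Defs.v *)
From HB Require Import structures.
From mathcomp Require Import all_boot all_order all_algebra.
From mathcomp Require Import all_classical all_reals all_analysis.
Set Implicit Arguments. Unset Strict Implicit. Unset Printing Implicit Defensive.
Import Order.TTheory GRing.Theory Num.Theory.
Import numFieldNormedType.Exports.
Local Open Scope ring_scope.
Local Open Scope classical_set_scope.

Section Defs.
Variable R : realType.

Definition dotv (d : nat) (u v : 'cV[R]_d) : R := \sum_(k < d) u k 0 * v k 0.

Definition enorm (m n : nat) (A : 'M[R]_(m, n)) : R :=
  Num.sqrt (\sum_(i < m) \sum_(j < n) A i j ^+ 2).

Definition specnorm (m n : nat) (A : 'M[R]_(m, n)) : R :=
  sup [set enorm (A *m x) | x in [set x : 'cV[R]_n | enorm x = 1]].

Definition grad (d : nat) (f : 'cV[R]_d -> R) (x : 'cV[R]_d) : 'cV[R]_d :=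
  \col_(k < d) ('d f x (delta_mx k 0 : 'cV[R]_d)).

Definition taskmx (d n : nat) (th0 : 'cV[R]_d) (th : 'I_n -> 'cV[R]_d) : 'M[R]_(d, n) :=
  \matrix_(k < d, i < n) (th i - th0) k 0.

Definition sorted_eigenvalues (n : nat) (G : 'M[R]_n) (s : seq R) : Prop :=
  [/\ size s = n, sorted (fun x y => y <= x) s &
      char_poly G = \prod_(x <- s) ('X - x%:P)].
End Defs.

(* Main.v *)
Require Import Defs.
From HB Require Import structures.
From mathcomp Require Import all_boot all_order all_algebra.
From mathcomp Require Import all_classical all_reals all_analysis.
From mathcomp Require Import ring lra.
Import Order.TTheory GRing.Theory Num.Theory.
Import numFieldNormedType.Exports.
Local Open Scope ring_scope.

Section Aux.
Context {R : realType}.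
Local Open Scope classical_set_scope.
Implicit Types (m : nat).

Lemma dotvC {m} (u v : 'cV[R]_m) : dotv u v = dotv v u.
Proof. by apply: eq_bigr => k _; rewrite mulrC. Qed.

Lemma dotvDl {m} (u v w : 'cV[R]_m) : dotv (u + v) w = dotv u w + dotv v w.
Proof. rewrite /dotv -big_split; apply: eq_bigr => k _; by rewrite !mxE mulrDl. Qed.

Lemma dotvZl {m} a (u w : 'cV[R]_m) : dotv (a *: u) w = a * dotv u w.
Proof. rewrite /dotv mulr_sumr; apply: eq_bigr => k _; rewrite !mxE; ring. Qed.

Lemma dotvNl {m} (u w : 'cV[R]_m) : dotv (- u) w = - dotv u w.
Proof. rewrite /dotv -sumrN; apply: eq_bigr => k _; rewrite !mxE; ring. Qed.

Lemma dotv0r {m} (u : 'cV[R]_m) : dotv u 0 = 0.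
Proof. by rewrite /dotv big1 // => k _; rewrite mxE mulr0. Qed.

Lemma dotv_ge0 {m} (u : 'cV[R]_m) : 0 <= dotv u u.
Proof. by apply: sumr_ge0 => k _; rewrite -expr2 sqr_ge0. Qed.

Lemma enormE {m} (u : 'cV[R]_m) : enorm u = Num.sqrt (dotv u u).
Proof. by rewrite /enorm /dotv; congr Num.sqrt; apply: eq_bigr => k _; rewrite big_ord1 expr2. Qed.

Lemma enorm_ge0 {m} (u : 'cV[R]_m) : 0 <= enorm u.
Proof. by rewrite enormE sqrtr_ge0. Qed.

Lemma enorm_sq {m} (u : 'cV[R]_m) : enorm u ^+ 2 = dotv u u.
Proof. by rewrite enormE sqr_sqrtr // dotv_ge0. Qed.

Lemma dotv_eq0 {m} (u v : 'cV[R]_m) : dotv u u = 0 -> dotv u v = 0.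
Proof.
move=> H.
have P0 : forall k : 'I_m, true -> 0 <= u k 0 * u k 0 by move=> k _; rewrite -expr2 sqr_ge0.
have H0 := psumr_eq0P P0 H.
rewrite /dotv big1 // => k _.
have : u k 0 * u k 0 = 0 by apply: H0.
by move/eqP; rewrite mulf_eq0 orbb => /eqP ->; rewrite mul0r.
Qed.

Lemma CS {m} (u v : 'cV[R]_m) : dotv u v <= enorm u * enorm v.
Proof.
set a := enorm u; set b := enorm v.
have a0 : 0 <= a := enorm_ge0 u. have b0 : 0 <= b := enorm_ge0 v.
have ea : dotv u u = a ^+ 2 by rewrite enorm_sq.
have eb : dotv v v = b ^+ 2 by rewrite enorm_sq.
have [ab0|abp] := eqVneq (a * b) 0.
  move/eqP: ab0; rewrite mulf_eq0 => /orP [/eqP az|/eqP bz].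
    by rewrite dotv_eq0 ?ea ?az ?expr0n ?mul0r.
  by rewrite dotvC dotv_eq0 ?eb ?bz ?expr0n ?mulr0.
have abg : 0 < a * b by rewrite lt_def abp mulr_ge0.
have := dotv_ge0 (b *: u - a *: v).
rewrite dotvDl !dotvZl dotvNl dotvZl ![dotv _ (_ + _)]dotvC !dotvDl !dotvNl !dotvZl.
rewrite ea eb (dotvC v u) => H.
nra.
Qed.

Lemma dotvNr {m} (u w : 'cV[R]_m) : dotv u (- w) = - dotv u w.
Proof. by rewrite dotvC dotvNl dotvC. Qed.

Lemma enormN {m} (u : 'cV[R]_m) : enorm (- u) = enorm u.
Proof. by rewrite !enormE dotvNl dotvNr opprK. Qed.

Lemma dotv_sqD {m} (u v : 'cV[R]_m) :
  dotv (u + v) (u + v) = dotv u u + 2 * dotv u v + dotv v v.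
Proof.
rewrite dotvDl ![dotv _ (_ + _)]dotvC !dotvDl (dotvC v u); ring.
Qed.

Lemma enorm_tri {m} (u v : 'cV[R]_m) : enorm (u + v) <= enorm u + enorm v.
Proof.
have a0 := enorm_ge0 u; have b0 := enorm_ge0 v.
rewrite [X in X <= _]enormE -(ger0_norm (addr_ge0 a0 b0)) -sqrtr_sqr ler_sqrt ?sqr_ge0 //.
rewrite dotv_sqD -!enorm_sq; have := CS u v; nra.
Qed.

Lemma mulmx_bound {p q} (A : 'M[R]_(p, q)) (x : 'cV[R]_q) :
  enorm x = 1 -> enorm (A *m x) <= enorm A.
Proof.
move=> hx; rewrite /enorm ler_sqrt; last first.
  by apply: sumr_ge0 => k _; apply: sumr_ge0 => j _; rewrite sqr_ge0.
apply: ler_sum => k _; rewrite big_ord1.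
set r : 'cV[R]_q := \col_j A k j.
have e1 : (A *m x) k 0 = dotv r x by rewrite mxE; apply: eq_bigr => j _; rewrite mxE.
have e2 : \sum_(j < q) A k j ^+ 2 = dotv r r by apply: eq_bigr => j _; rewrite mxE expr2.
rewrite e1 e2 -enorm_sq.
have h1 := CS r x; have h2 := CS r (- x).
rewrite dotvNr enormN hx mulr1 in h2; rewrite hx mulr1 in h1.
have := enorm_ge0 r; nra.
Qed.

Lemma enorm_delta {q} (i : 'I_q) : enorm (delta_mx i 0 : 'cV[R]_q) = 1.
Proof.
rewrite enormE /dotv (bigD1 i) //= big1 ?addr0 ?mxE ?eqxx ?mulr1 ?sqrtr1 //.
move=> k hk; rewrite mxE; case: eqP => [ki|_]; [by rewrite ki eqxx in hk | by rewrite mul0r].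
Qed.

Lemma spec_col {p q} (A : 'M[R]_(p, q)) (i : 'I_q) : enorm (col i A) <= specnorm A.
Proof.
rewrite colE /specnorm.
set E := [set enorm (A *m x) | x in [set x : 'cV[R]_q | enorm x = 1]].
pose dl : 'cV[R]_q := delta_mx i 0.
have hs : has_sup E.
  split; first by exists (enorm (A *m dl)); exists dl => //; exact: enorm_delta.
  by exists (enorm A) => y [x hx <-]; exact: mulmx_bound.
apply: (sup_upper_bound hs); exists dl => //; exact: enorm_delta.
Qed.

Lemma enormZ {m} a (v : 'cV[R]_m) : enorm (a *: v) = `|a| * enorm v.
Proof.
by rewrite !enormE dotvZl dotvC dotvZl mulrA -expr2 sqrtrM ?sqr_ge0 // sqrtr_sqr.
Qed.

Lemma sqD_le {m} (x y : 'cV[R]_m) :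
  dotv (x + y) (x + y) <= 2 * dotv x x + 2 * dotv y y.
Proof.
rewrite dotv_sqD -!enorm_sq; have := CS x y.
have := sqr_ge0 (enorm x - enorm y); rewrite sqrrB; lra.
Qed.
End Aux.
Theorem mainTheorem9 (R : realType) (d n : nat)
  (th0 : 'cV[R]_d) (th : 'I_n -> 'cV[R]_d) (Loss : 'I_n -> 'cV[R]_d -> R)
  (C eps r : R) (Lc : 'I_n -> R) (M : nat)
  (We : 'M[R]_(n, M)) (Wd : 'M[R]_(M, n)) (s : seq R)
  (i : 'I_n) (alpha : R) :
  (forall k x, differentiable (Loss k) x) ->
  (forall k, grad (Loss k) (th k) = 0) ->
  0 < C ->
  (forall k, enorm (th k - th0) ^+ 2 <= C) ->
  0 < eps -> eps <= 1 ->
  (forall k l, k != l ->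
     `|dotv (th k - th0) (th l - th0)|
       <= eps * enorm (th k - th0) * enorm (th l - th0)) ->
  sorted_eigenvalues ((taskmx th0 th)^T *m taskmx th0 th) s ->
  (1 <= M)%N -> (M < n)%N ->
  specnorm (taskmx th0 th *m We *m Wd - taskmx th0 th) ^+ 2 = nth 0 s M ->
  0 <= alpha -> alpha <= 1 ->
  (forall k, 0 <= Lc k) ->
  (forall k x, enorm (x - th k) <= r ->
     `|Loss k x - Loss k (th k) - dotv (x - th k) (grad (Loss k) (th k))|
       <= Lc k / 2 * enorm (x - th k) ^+ 2) ->
  2 * Num.sqrt C + Num.sqrt (nth 0 s M) <= r ->
  let theta_neg := th0 - alpha *: col i (taskmx th0 th *m We *m Wd) in
  forall j, j != i ->
    Loss j theta_neg - Loss j th0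
      <= Lc j * C * (5%:R / 2%:R + 2%:R * eps) + Lc j * nth 0 s M.
Proof.
move=> hdiff hgrad C0 hC e0 e1 hpair hsort M1 Mn hspec a0 a1 L0 hsm hr theta_neg j ji.
set lam := nth 0 s M.
set T := taskmx th0 th.
set A := T *m We *m Wd - T.
set u := th j - th0. set ti := th i - th0. set e := col i A.
have eq1 : theta_neg - th j = - (u + (alpha *: ti + alpha *: e)).
  apply/matrixP => a b; rewrite /theta_neg (ord1 b) !mxE; ring.
have sp0 : 0 <= specnorm A := le_trans (enorm_ge0 _) (spec_col A i).
have lam0 : 0 <= lam by rewrite /lam -hspec sqr_ge0.
have heS : enorm e <= Num.sqrt lam.
  by rewrite /lam -hspec sqrtr_sqr ger0_norm //; exact: spec_col.
have he : dotv e e <= lam.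
  rewrite -enorm_sq; have := enorm_ge0 e; have := spec_col A i.
  rewrite -/e /lam -hspec; nra.
have hu : dotv u u <= C by rewrite -enorm_sq; exact: hC.
have hti : dotv ti ti <= C by rewrite -enorm_sq; exact: hC.
have huS : enorm u <= Num.sqrt C.
  by rewrite -[enorm u]ger0_norm ?enorm_ge0 // -sqrtr_sqr ler_sqrt ?(ltW C0) //; exact: hC.
have htiS : enorm ti <= Num.sqrt C.
  by rewrite -[enorm ti]ger0_norm ?enorm_ge0 // -sqrtr_sqr ler_sqrt ?(ltW C0) //; exact: hC.
have sC0 := sqrtr_ge0 C.
have sCC : Num.sqrt C * Num.sqrt C = C by rewrite -expr2 sqr_sqrtr // ltW.
have hdot : dotv u ti <= eps * C.
  have := hpair j i ji; rewrite -/u -/ti => h.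
  have h2 : enorm u * enorm ti <= C.
    rewrite -sCC; apply: ler_pM => //; exact: enorm_ge0.
  apply: le_trans (ler_norm _) (le_trans h _).
  rewrite -mulrA; apply: ler_wpM2l; lra.
have hN : dotv (u + (alpha *: ti + alpha *: e)) (u + (alpha *: ti + alpha *: e))
          <= 4%:R * C + 4%:R * eps * C + 2 * lam.
  rewrite addrA; apply: le_trans (sqD_le _ _) _.
  rewrite dotv_sqD !dotvZl ![dotv _ (alpha *: _)]dotvC !dotvZl.
  have hti' : alpha * (alpha * dotv ti ti) <= C.
    apply: le_trans hti; apply: le_trans (ler_piMl _ a1) _.
      by apply: mulr_ge0 => //; exact: dotv_ge0.
    by apply: ler_piMl => //; exact: dotv_ge0.
  have he' : alpha * (alpha * dotv e e) <= lam.
    apply: le_trans he; apply: le_trans (ler_piMl _ a1) _.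
      by apply: mulr_ge0 => //; exact: dotv_ge0.
    by apply: ler_piMl => //; exact: dotv_ge0.
  have hd' : alpha * dotv u ti <= eps * C.
    have : 0 <= eps * C by apply: mulr_ge0; lra.
    nra.
  rewrite (dotvC ti u); lra.
have hrad : enorm (theta_neg - th j) <= r.
  rewrite eq1 enormN; apply: le_trans (enorm_tri _ _) _.
  apply: le_trans (lerD (lexx _) (enorm_tri _ _)) _.
  rewrite !enormZ ger0_norm //.
  have := enorm_ge0 ti; have := enorm_ge0 e; nra.
have hrad0 : enorm (th0 - th j) <= r.
  have -> : th0 - th j = - u by rewrite /u opprB.
  rewrite enormN; have := enorm_ge0 e; nra.
have h1 := hsm j _ hrad; have h2 := hsm j _ hrad0.
rewrite hgrad dotv0r subr0 in h1; rewrite hgrad dotv0r subr0 in h2.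
move: h1 h2; rewrite !ler_norml => /andP [_ h1] /andP [h2 _].
have eq2 : th0 - th j = - u by rewrite /u opprB.
rewrite eq2 eq1 !enormN !enorm_sq in h1 h2.
have P1 := ler_wpM2l (L0 j) hN.
have P2 := ler_wpM2l (L0 j) hu.
lra.
Qed.
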